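(* Let $M$ and $k$ be fixed nonnegative integers, and let $\Phi$ be an open formula of $\mathcal{L}_{\mathrm{Ab}}$ with $n$ variables such that every term occurring in $\Phi$ has depth at most $k$. Then for any $a_1,\dots,a_n\in[-2^M,2^M]$, $$\mathbf{R}\models\Phi(a_1,\dots,a_n)\quad\text{iff}\quad [0,1]_{\text{\L}}[\tfrac12]\models\tau'(\Phi)(r_{M,k}(a_1),\dots,r_{M,k}(a_n)).$$ Equivalently, for any $b_1,\dots,b_n\in\left[\tfrac12-\tfrac1{2^{k+1}},\tfrac12+\tfrac1{2^{k+1}}\right]$, $$[0,1]_{\text{\L}}[\tfrac12]\models\tau'(\Phi)(b_1,\dots,b_n)\quad\text{iff}\quad \mathbf{R}\models\Phi(r_{M,k}^{-1}(b_1),\dots,r_{M,k}^{-1}(b_n)).$$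
   Context: $\mathcal{L}_{\mathrm{Ab}}=\langle +,-,0,\wedge,\vee\rangle$; $\mathbf{R}=\langle\mathbb{R},+,-,\wedge,\vee,0\rangle$ is the ordered additive group of reals with $\wedge=\min$, $\vee=\max$. Open formulas are finite Boolean combinations (negation, conjunction, disjunction) of atoms $\phi=\psi$. $[0,1]_{\text{\L}}[\tfrac12]$ has domain $[0,1]$ with $\neg a=1-a$, $a\otimes b=\max(0,a+b-1)$, $a\oplus b=\min(1,a+b)$, $a\to b=\min(1,1-a+b)$, $\wedge=\min$, $\vee=\max$, and constants $0,1,\tfrac12$. Depth of terms: variables and constants have depth $0$, $\mathrm{depth}(-\phi)=\mathrm{depth}(\phi)+1$, $\mathrm{depth}(\phi\circ\psi)=\max(\mathrm{depth}(\phi),\mathrm{depth}(\psi))+1$ for $\circ\in\{+,\wedge,\vee\}$. The term translation $\tau$: $\tau(x)=x$ for variables; $\tau(0)=\tfrac12$; $\tau(-\phi)=\neg\tau(\phi)$; $\tau(\phi+\psi)=(\tau(\phi)\oplus\tau(\psi))\otimes(\tfrac12\oplus(\tau(\phi)\otimes\tau(\psi)))$; $\tau(\phi\vee\psi)=\tau(\phi)\vee\tau(\psi)$; $\tau(\phi\wedge\psi)=\tau(\phi)\wedge\tau(\psi)$. For an open formula $\Phi$, $\tau'(\Phi)$ is obtained by replacing each atom $\phi=\psi$ by $\tau(\phi)=\tau(\psi)$, leaving the Boolean structure unchanged. $r_{M,k}(a)=\frac{a}{2^{M+k+1}}+\frac12$, a bijection from $[-2^M,2^M]$ onto $[\tfrac12-\tfrac1{2^{k+1}},\tfrac12+\tfrac1{2^{k+1}}]$.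 *)

(* Defs.v *)
From HB Require Import structures.
From mathcomp Require Import all_boot all_order all_algebra.
From mathcomp Require Import reals.
Set Implicit Arguments. Unset Strict Implicit. Unset Printing Implicit Defensive.
Import Order.TTheory GRing.Theory Num.Theory.
Local Open Scope ring_scope.

Inductive abterm (n : nat) : Type :=
  | AVar  : 'I_n -> abterm n
  | AZero : abterm n
  | ANeg  : abterm n -> abterm n
  | AAdd  : abterm n -> abterm n -> abterm n
  | AMeet : abterm n -> abterm n -> abterm n
  | AJoin : abterm n -> abterm n -> abterm n.

Inductive abform (n : nat) : Type :=
  | AEq  : abterm n -> abterm n -> abform n
  | ANot : abform n -> abform n
  | AAnd : abform n -> abform n -> abform n
  | AOr  : abform n -> abform n -> abform n.

Arguments AZero {n}.

Fixpoint depth n (t : abterm n) : nat :=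
  match t with
  | AVar _ | AZero => 0
  | ANeg s => (depth s).+1
  | AAdd s u | AMeet s u | AJoin s u => (maxn (depth s) (depth u)).+1
  end.

(* every term occurring in the formula has depth <= k
   (subterms of a term have smaller depth, so it suffices to bound atom sides) *)
Fixpoint form_depth_le n (k : nat) (F : abform n) : Prop :=
  match F with
  | AEq s u => (depth s <= k)%N /\ (depth u <= k)%N
  | ANot G => form_depth_le k G
  | AAnd G H | AOr G H => form_depth_le k G /\ form_depth_le k H
  end.

Fixpoint evalAb (R : realType) n (a : 'I_n -> R) (t : abterm n) : R :=
  match t with
  | AVar i => a i
  | AZero => 0
  | ANeg s => - evalAb a s
  | AAdd s u => evalAb a s + evalAb a u
  | AMeet s u => Num.min (evalAb a s) (evalAb a u)
  | AJoin s u => Num.max (evalAb a s) (evalAb a u)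
  end.

Fixpoint holdsAb (R : realType) n (a : 'I_n -> R) (F : abform n) : Prop :=
  match F with
  | AEq s u => evalAb a s = evalAb a u
  | ANot G => ~ holdsAb a G
  | AAnd G H => holdsAb a G /\ holdsAb a H
  | AOr G H => holdsAb a G \/ holdsAb a H
  end.

Inductive lterm (n : nat) : Type :=
  | LVar  : 'I_n -> lterm n
  | LZero : lterm n
  | LOne  : lterm n
  | LHalf : lterm n
  | LNeg  : lterm n -> lterm n
  | LOtimes : lterm n -> lterm n -> lterm n
  | LOplus  : lterm n -> lterm n -> lterm n
  | LImp  : lterm n -> lterm n -> lterm n
  | LMeet : lterm n -> lterm n -> lterm n
  | LJoin : lterm n -> lterm n -> lterm n.

Arguments LZero {n}.
Arguments LOne {n}.
Arguments LHalf {n}.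

Inductive lform (n : nat) : Type :=
  | LEq  : lterm n -> lterm n -> lform n
  | LNot : lform n -> lform n
  | LAnd : lform n -> lform n -> lform n
  | LOr  : lform n -> lform n -> lform n.

(* ---------- Semantics in the standard MV-algebra [0,1]_L[1/2] ----------
   The carrier is [0,1] (subset of R); the operations below are the
   standard ones and map [0,1] into [0,1]. *)
Definition lneg (R : realType) (x : R) : R := 1 - x.
Definition lotimes (R : realType) (x y : R) : R := Num.max 0 (x + y - 1).
Definition loplus (R : realType) (x y : R) : R := Num.min 1 (x + y).
Definition limp (R : realType) (x y : R) : R := Num.min 1 (1 - x + y).

Fixpoint evalL (R : realType) n (b : 'I_n -> R) (t : lterm n) : R :=
  match t with
  | LVar i => b i
  | LZero => 0
  | LOne => 1
  | LHalf => 2^-1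
  | LNeg s => lneg (evalL b s)
  | LOtimes s u => lotimes (evalL b s) (evalL b u)
  | LOplus s u => loplus (evalL b s) (evalL b u)
  | LImp s u => limp (evalL b s) (evalL b u)
  | LMeet s u => Num.min (evalL b s) (evalL b u)
  | LJoin s u => Num.max (evalL b s) (evalL b u)
  end.

Fixpoint holdsL (R : realType) n (b : 'I_n -> R) (F : lform n) : Prop :=
  match F with
  | LEq s u => evalL b s = evalL b u
  | LNot G => ~ holdsL b G
  | LAnd G H => holdsL b G /\ holdsL b H
  | LOr G H => holdsL b G \/ holdsL b H
  end.

Fixpoint tau n (t : abterm n) : lterm n :=
  match t with
  | AVar i => LVar i
  | AZero => LHalf
  | ANeg s => LNeg (tau s)
  | AAdd s u =>
      LOtimes (LOplus (tau s) (tau u)) (LOplus LHalf (LOtimes (tau s) (tau u)))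
  | AMeet s u => LMeet (tau s) (tau u)
  | AJoin s u => LJoin (tau s) (tau u)
  end.

Fixpoint tau' n (F : abform n) : lform n :=
  match F with
  | AEq s u => LEq (tau s) (tau u)
  | ANot G => LNot (tau' G)
  | AAnd G H => LAnd (tau' G) (tau' H)
  | AOr G H => LOr (tau' G) (tau' H)
  end.

Definition r_map (R : realType) (M k : nat) (a : R) : R :=
  a / 2 ^+ (M + k + 1) + 2^-1.
Definition r_inv (R : realType) (M k : nat) (b : R) : R :=
  (b - 2^-1) * 2 ^+ (M + k + 1).

(* Main.v *)
Require Import Defs.
From HB Require Import structures.
From mathcomp Require Import all_boot all_order all_algebra.
From mathcomp Require Import reals.
From mathcomp Require Import ring lra.
Import Order.TTheory GRing.Theory Num.Theory.
Local Open Scope ring_scope.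

Lemma add_key (R : realType) (x y : R) : -4^-1 <= x <= 4^-1 -> -4^-1 <= y <= 4^-1 ->
  Num.max 0 (Num.min 1 (x + 2^-1 + (y + 2^-1)) + Num.min 1 (2^-1 + Num.max 0 (x + 2^-1 + (y+2^-1) - 1)) - 1) = x + y + 2^-1.
Proof.
move=> /andP[? ?] /andP[? ?].
rewrite /Num.min /Num.max.
by repeat case: ifP => /=; move=> ?; try lra.
Qed.

Lemma min_aff (R : realType) (c x y : R) : 0 < c ->
  Num.min (x / c + 2^-1) (y / c + 2^-1) = Num.min x y / c + 2^-1.
Proof.
move=> c0; have ci : 0 < c^-1 by rewrite invr_gt0.
rewrite /Num.min; case: ifP => h1; case: ifP => h2 //.
- move: h1; rewrite ltrD2r ltr_pM2r // h2 //.
- move: h1; rewrite ltrD2r ltr_pM2r // h2 //.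
Qed.

Lemma max_aff (R : realType) (c x y : R) : 0 < c ->
  Num.max (x / c + 2^-1) (y / c + 2^-1) = Num.max x y / c + 2^-1.
Proof.
move=> c0; have ci : 0 < c^-1 by rewrite invr_gt0.
rewrite /Num.max; case: ifP => h1; case: ifP => h2 //.
- move: h1; rewrite ltrD2r ltr_pM2r // h2 //.
- move: h1; rewrite ltrD2r ltr_pM2r // h2 //.
Qed.

Section S.
Variables (R : realType) (M k n : nat).
Variable a : 'I_n -> R.
Hypothesis Ha : forall i, - 2 ^+ M <= a i <= 2 ^+ M.

Definition P (d : nat) : R := 2 ^+ M * 2 ^+ d.

Lemma P_ge0 d : 0 <= P d.
Proof. by rewrite /P mulr_ge0 // exprn_ge0. Qed.

Lemma P_S d : P d.+1 = 2 * P d.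
Proof. by rewrite /P exprS; ring. Qed.

Lemma P_mono d e : (d <= e)%N -> P d <= P e.
Proof.
move=> h; rewrite /P; apply: ler_wpM2l; first by rewrite exprn_ge0.
by rewrite ler_eXn2l // ltr1n.
Qed.

Lemma bound t : - P (depth t) <= evalAb a t <= P (depth t).
Proof.
elim: t => [i||s IH|s IHs u IHu|s IHs u IHu|s IHs u IHu] /=.
- by rewrite /P expr0 mulr1; exact: Ha.
- by rewrite oppr_le0 P_ge0.
- rewrite P_S; move: IH (P_ge0 (depth s)) => /andP[? ?] ?; apply/andP; split; lra.
- have h1 := P_mono _ _ (leq_maxl (depth s) (depth u)).
  have h2 := P_mono _ _ (leq_maxr (depth s) (depth u)).
  rewrite P_S; move: IHs IHu => /andP[? ?] /andP[? ?]; apply/andP; split; lra.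
- have h1 := P_mono _ _ (leq_maxl (depth s) (depth u)).
  have h2 := P_mono _ _ (leq_maxr (depth s) (depth u)).
  rewrite P_S; move: IHs IHu (P_ge0 (maxn (depth s) (depth u))) => /andP[? ?] /andP[? ?] ?.
  rewrite /Num.min; case: ifP => _; apply/andP; split; lra.
- have h1 := P_mono _ _ (leq_maxl (depth s) (depth u)).
  have h2 := P_mono _ _ (leq_maxr (depth s) (depth u)).
  rewrite P_S; move: IHs IHu (P_ge0 (maxn (depth s) (depth u))) => /andP[? ?] /andP[? ?] ?.
  rewrite /Num.max; case: ifP => _; apply/andP; split; lra.
Qed.

Let c : R := 2 ^+ (M + k + 1).
Lemma c_gt0 : 0 < c. Proof. by rewrite exprn_gt0. Qed.

Lemma small t : (depth t < k)%N -> - 4^-1 <= evalAb a t / c <= 4^-1.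
Proof.
move=> h.
have hP : 4 * P (depth t) <= c.
  have -> : c = P (k.+1) by rewrite /c /P -exprD addn1 addnS.
  have e : 4 * P (depth t) = P (depth t).+2 by rewrite !P_S; ring.
  by rewrite e P_mono.
move: (bound t) => /andP[h1 h2].
have c0 := c_gt0.
apply/andP; split.
- rewrite ler_pdivlMr //; lra.
- rewrite ler_pdivrMr //; lra.
Qed.

Variable b : 'I_n -> R.
Hypothesis Hb : forall i, b i = a i / c + 2^-1.

Lemma hom t : (depth t <= k)%N -> evalL b (tau t) = evalAb a t / c + 2^-1.
Proof.
elim: t => [i||s IH|s IHs u IHu|s IHs u IHu|s IHs u IHu] /= hd.
- exact: Hb.
- by rewrite mul0r add0r.
- rewrite IH; last by apply: ltnW.
  rewrite /lneg mulNr; lra.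
- have hs : (depth s < k)%N := (leq_ltn_trans (leq_maxl _ _) hd).
  have hu : (depth u < k)%N := (leq_ltn_trans (leq_maxr _ _) hd).
  rewrite (IHs (ltnW hs)) (IHu (ltnW hu)) /lotimes /loplus mulrDl.
  by rewrite add_key // small.
- have hs : (depth s <= k)%N := leq_trans (leq_maxl _ _) (ltnW hd).
  have hu : (depth u <= k)%N := leq_trans (leq_maxr _ _) (ltnW hd).
  by rewrite (IHs hs) (IHu hu) min_aff // c_gt0.
- have hs : (depth s <= k)%N := leq_trans (leq_maxl _ _) (ltnW hd).
  have hu : (depth u <= k)%N := leq_trans (leq_maxr _ _) (ltnW hd).
  by rewrite (IHs hs) (IHu hu) max_aff // c_gt0.
Qed.

Lemma form_equiv F : form_depth_le k F -> (holdsAb a F <-> holdsL b (tau' F)).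
Proof.
elim: F => [s u|G IH|G IHG H IHH|G IHG H IHH] /=.
- move=> [hs hu]; rewrite hom // hom //; split; first by move=> ->.
  move=> /addIr e; have c0 := c_gt0.
  by rewrite -(divfK (lt0r_neq0 c0) (evalAb a s)) e divfK // lt0r_neq0.
- move=> /IH h; tauto.
- move=> [/IHG h1 /IHH h2]; tauto.
- move=> [/IHG h1 /IHH h2]; tauto.
Qed.

End S.

Theorem mainTheorem5 (R : realType) (M k n : nat) (Phi : abform n) :
  form_depth_le k Phi ->
  (forall a : 'I_n -> R,
     (forall i, - 2 ^+ M <= a i <= 2 ^+ M) ->
     (holdsAb a Phi <-> holdsL (fun i => r_map M k (a i)) (tau' Phi))) /\
  (forall b : 'I_n -> R,
     (forall i, 2^-1 - (2 ^+ (k + 1))^-1 <= b i <= 2^-1 + (2 ^+ (k + 1))^-1) ->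
     (holdsL b (tau' Phi) <-> holdsAb (fun i => r_inv M k (b i)) Phi)).
Proof.
move=> hF; split.
- move=> a Ha; exact: (@form_equiv R M k n a Ha _ (fun i => erefl) Phi hF).
- move=> b Hb.
  have c0 : (2 : R) ^+ (M + k + 1) != 0 by rewrite lt0r_neq0 // exprn_gt0.
  have Ha : forall i, - 2 ^+ M <= r_inv M k (b i) <= 2 ^+ M.
    move=> i; rewrite /r_inv -addnA exprD.
    have w0 : (0 : R) < 2 ^+ (k + 1) by rewrite exprn_gt0.
    have m0 : (0 : R) < 2 ^+ M by rewrite exprn_gt0.
    set w := (2 : R) ^+ (k + 1) in w0 Hb *; set m := (2 : R) ^+ M in m0 *.
    have wi : w * w^-1 = 1 by rewrite mulfV // lt0r_neq0.
    move: (Hb i) => /andP[h1 h2].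
    have e1 : (b i - 2^-1) * w <= 1 by nra.
    have e2 : -1 <= (b i - 2^-1) * w by nra.
    apply/andP; split; nra.
  have Hb' : forall i, b i = r_inv M k (b i) / 2 ^+ (M + k + 1) + 2^-1.
    by move=> i; rewrite /r_inv mulfK //; lra.
  by rewrite (@form_equiv R M k n _ Ha b Hb' Phi hF).
Qed.
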